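(* Let $n\geq 2$ be an integer and let $D\subset\{0,1,\ldots,n^2\}$ satisfy $|d-d'|\neq 1$ for all $d,d'\in D$. Let $k\ge1$ and let $(d_1,\ldots,d_k),(d_1',\ldots,d_k')\in D^k$ with $d_j\neq d_j'$ for some $1\le j\le k$. Then the $k$-tiles $T_{d_1,\ldots,d_k}$ and $T_{d_1',\ldots,d_k'}$ of $T_n$ are disjoint.
   Context: Let $b:=-n+i$. $T_n$ is the attractor of $\{z\mapsto b^{-1}(z+d): d\in\{0,1,\ldots,n^2\}\}$, i.e. $T_n=\{\sum_{j\ge1}d_jb^{-j}: d_j\in\{0,\ldots,n^2\}\}$. For $d_1,\ldots,d_k\in\{0,\ldots,n^2\}$, the $k$-tile $T_{d_1,\ldots,d_k}$ is $\{\sum_{j=1}^k d_jb^{-j}+b^{-k}t: t\in T_n\}$. *)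

(* Defs.v *)
From Stdlib Require Import Reals List.
From Coquelicot Require Import Coquelicot.
Open Scope C_scope.

Definition base (n : nat) : C := ((- INR n)%R, 1%R).

(* T_n = { sum_{j>=1} d_j b^{-j} : d_j in {0,...,n^2} }, series indexed from 0
   with term j being d_{j+1} b^{-(j+1)} *)
Definition in_Tn (n : nat) (z : C) : Prop :=
  exists d : nat -> nat,
    (forall j, (d j <= n * n)%nat) /\
    is_series (fun j => RtoC (INR (d j)) * / (base n ^ (S j))) z.

Fixpoint csum (k : nat) (f : nat -> C) : C :=
  match k with
  | O => RtoC 0
  | S k' => csum k' f + f k'
  end.

Definition in_tile (n : nat) (ds : list nat) (z : C) : Prop :=
  exists t, in_Tn n t /\
    z = csum (length ds) (fun j => RtoC (INR (nth j ds 0%nat)) * / (base n ^ (S j)))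
        + / (base n ^ length ds) * t.

(* Main.v *)
Require Import Defs.
From Stdlib Require Import Reals List Lra Lia.
From Coquelicot Require Import Coquelicot.
Open Scope C_scope.

Lemma base_neq0 n : base n <> 0.
Proof. unfold base. intro H. injection H. intros. lra. Qed.

Lemma base_pow_neq0 n j : base n ^ j <> 0.
Proof. apply Cpow_nz. apply base_neq0. Qed.

Definition repr n (f : nat -> R) (u : C) :=
  is_series (fun i => RtoC (f i) * / (base n ^ (S i))) u.

Lemma repr_shift n f u : repr n f u -> repr n (fun i => f (S i)) (base n * u - RtoC (f O)).
Proof.
  intro H. unfold repr in *.
  set (a := fun i => RtoC (f i) * / (base n ^ (S i))) in *.
  assert (H1 : is_series (fun k => a (S k)) (u - a O)).
  { apply is_series_incr_1. change (is_series a (Cplus (u - a O) (a O))).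
    replace (Cplus (u - a O) (a O)) with u by ring. exact H. }
  apply (is_series_scal (base n)) in H1.
  eapply is_series_ext; [|  replace (base n * u - RtoC (f O)) with (scal (base n) (u - a O)); [exact H1|]].
  - intro k. unfold a. change scal with Cmult. simpl.
    pose proof (base_neq0 n). pose proof (base_pow_neq0 n k). field. split; auto.
  - unfold a. change scal with Cmult. simpl.
    pose proof (base_neq0 n). field. auto.
Qed.

Definition cons_seq (a : R) (f : nat -> R) (i : nat) : R :=
  match i with O => a | S i' => f i' end.

Lemma repr_cons n a f u : repr n f u -> repr n (cons_seq a f) ((RtoC a + u) / base n).
Proof.
  intro H. unfold repr in *.
  apply is_series_decr_1.
  change (is_series (fun k => RtoC (f k) * / base n ^ S (S k))
    (Cplus ((RtoC a + u) / base n) (Copp (RtoC a * / base n ^ 1)))).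
  replace (Cplus ((RtoC a + u) / base n) (Copp (RtoC a * / base n ^ 1))) with (/ base n * u).
  2:{ pose proof (base_neq0 n). simpl. field. auto. }
  apply (is_series_scal (/ base n)) in H.
  eapply is_series_ext; [| exact H].
  intro k. change scal with Cmult. simpl.
  pose proof (base_neq0 n). pose proof (base_pow_neq0 n k). field. split; auto.
Qed.

Fixpoint prepend (ds : list nat) (d : nat -> nat) (i : nat) : R :=
  match ds with
  | nil => INR (d i)
  | a :: ds' => cons_seq (INR a) (prepend ds' d) i
  end.

Lemma csum_S L f : csum (S L) f = f O + csum L (fun j => f (S j)).
Proof.
  induction L; simpl. ring.
  simpl in IHL. rewrite IHL. ring.
Qed.

Lemma csum_scal L c f : csum L (fun j => c * f j) = c * csum L f.
Proof. induction L; simpl. ring. rewrite IHL. ring. Qed.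

Lemma csum_ext L f g : (forall j, f j = g j) -> csum L f = csum L g.
Proof. intro H. induction L; simpl; auto. rewrite IHL, H. auto. Qed.

Lemma tile_repr n ds d t :
  is_series (fun j => RtoC (INR (d j)) * / (base n ^ (S j))) t ->
  repr n (prepend ds d)
    (csum (length ds) (fun j => RtoC (INR (nth j ds 0%nat)) * / (base n ^ (S j)))
     + / (base n ^ length ds) * t).
Proof.
  intro Ht. induction ds as [|a ds IH].
  - simpl. assert (E : (RtoC 0 + / 1 * t : C) = t) by field.
    unfold repr. rewrite E. exact Ht.
  - simpl length. rewrite csum_S.
    pose proof (base_neq0 n).
    replace (csum (length ds) (fun j => RtoC (INR (nth (S j) (a :: ds) 0%nat)) * / base n ^ S (S j)))
      with (/ base n * csum (length ds) (fun j => RtoC (INR (nth j ds 0%nat)) * / base n ^ S j)).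
    2:{ rewrite <- csum_scal. apply csum_ext. intro j. simpl.
        pose proof (base_pow_neq0 n j). field. split; auto. }
    replace (RtoC (INR (nth 0 (a :: ds) 0%nat)) * / base n ^ 1 +
       / base n * csum (length ds) (fun j => RtoC (INR (nth j ds 0%nat)) * / base n ^ S j) +
       / base n ^ S (length ds) * t)
      with ((RtoC (INR a) + (csum (length ds) (fun j => RtoC (INR (nth j ds 0%nat)) * / base n ^ S j)
            + / base n ^ length ds * t)) / base n).
    2:{ simpl. pose proof (base_pow_neq0 n (length ds)). field. split; auto. }
    apply (repr_cons _ (INR a)) in IH. exact IH.
Qed.

Lemma Im_cont (l : C) : filterlim Im (locally l) (locally (Im l)).
Proof.
  intros P [eps H]. exists eps. intros y [_ Hy]. apply H. exact Hy.
Qed.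

Lemma series_Im (a : nat -> C) (u : C) :
  is_series a u -> is_lim_seq (fun N => Im (sum_n a N)) (Im u).
Proof.
  intro H. unfold is_lim_seq.
  exact (filterlim_comp _ _ _ (sum_n a) Im eventually (locally u) (locally (Im u)) H (Im_cont u)).
Qed.

Definition imw n i := Im (/ base n ^ (S i)).

Fixpoint SI n N := match N with
  | O => Rabs (imw n 0)
  | S N' => (SI n N' + Rabs (imw n (S N')))%R end.

Lemma partial_bound n f N :
  (forall i, Rabs (f i) <= INR n * INR n)%R ->
  Rle (Rabs (Im (sum_n (fun i => RtoC (f i) * / (base n ^ (S i))) N))) (INR n * INR n * SI n N)%R.
Proof.
  intro Hf. induction N.
  - rewrite sum_O. simpl SI. unfold imw.
    replace (Im (RtoC (f 0%nat) * / base n ^ 1)) with (f 0%nat * Im (/ base n ^ 1))%R.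
    2:{ destruct (/ base n ^ 1). simpl. ring. }
    rewrite Rabs_mult. apply Rmult_le_compat_r. apply Rabs_pos. apply Hf.
  - rewrite sum_Sn. simpl SI.
    change (plus (sum_n (fun i => (RtoC (f i) * / base n ^ S i)%C) N)
          (RtoC (f (S N)) * / base n ^ S (S N))%C) with
      (Cplus (sum_n (fun i => (RtoC (f i) * / base n ^ S i)%C) N)
          (RtoC (f (S N)) * / base n ^ S (S N))%C).
    replace (Im (Cplus (sum_n (fun i => (RtoC (f i) * / base n ^ S i)%C) N)
          (RtoC (f (S N)) * / base n ^ S (S N))%C)) with
      (Im (sum_n (fun i => (RtoC (f i) * / base n ^ S i)%C) N) + f (S N) * imw n (S N))%R.
    2:{ unfold imw. destruct (sum_n (fun i => (RtoC (f i) * / base n ^ S i)%C) N).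
        destruct (/ base n ^ S (S N)). simpl. ring. }
    eapply Rle_trans. apply Rabs_triang.
    rewrite Rmult_plus_distr_l. apply Rplus_le_compat. exact IHN.
    rewrite Rabs_mult. apply Rmult_le_compat_r. apply Rabs_pos. apply Hf.
Qed.

Lemma Im_le_Cmod w : (Rabs (Im w) <= Cmod w)%R.
Proof.
  destruct w as [x y]. unfold Cmod. simpl.
  rewrite <- sqrt_Rsqr_abs. apply sqrt_le_1_alt. unfold Rsqr. nra.
Qed.

Lemma imw_le n i : (1 <= n)%nat -> (Rabs (imw n i) <= (/ INR n) ^ (S i))%R.
Proof.
  intro Hn. unfold imw. eapply Rle_trans. apply Im_le_Cmod.
  rewrite Cmod_inv by apply base_pow_neq0. rewrite Cmod_pow.
  assert (Hn' : (1 <= INR n)%R) by (apply (le_INR 1); auto).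
  assert (Hb : (INR n <= Cmod (base n))%R).
  { unfold Cmod, base. simpl. apply Rle_trans with (sqrt (INR n ^ 2)).
    rewrite sqrt_pow2; lra. apply sqrt_le_1_alt. nra. }
  rewrite pow_inv. apply Rinv_le_contravar. apply pow_lt. lra.
  apply pow_incr. lra.
Qed.

Lemma inv_base n : / base n = ((- INR n / (INR n * INR n + 1))%R, (- 1 / (INR n * INR n + 1))%R).
Proof.
  assert (H : (INR n * INR n + 1 > 0)%R) by nra.
  unfold base, Cinv. simpl. f_equal; field; nra.
Qed.

Lemma imw_vals n :
  let x := INR n in let q := (x * x + 1)%R in
  imw n 0 = (- 1 / q)%R /\ imw n 1 = (2 * x / (q * q))%R /\
  imw n 2 = (- (3 * x * x - 1) / (q * q * q))%R.
Proof.
  intros x q. assert (H : (q > 0)%R) by (unfold q; nra).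
  unfold imw. rewrite <- !Cpow_inv by apply base_neq0. rewrite inv_base.
  fold x. fold q. simpl. split; [|split]; field; lra.
Qed.

Lemma SI_mono n N M : (N <= M)%nat -> (SI n N <= SI n M)%R.
Proof.
  induction 1. lra. simpl. pose proof (Rabs_pos (imw n (S m))). lra.
Qed.

Lemma SI_tail n N : (2 <= n)%nat ->
  (SI n (N + 2) + (/ INR n) ^ (N + 4) / (1 - / INR n) <= SI n 2 + (/ INR n) ^ 4 / (1 - / INR n))%R.
Proof.
  intro Hn. assert (Hx : (2 <= INR n)%R) by (apply (le_INR 2); auto).
  set (r := (/ INR n)%R).
  assert (Hr : (0 < r <= / 2)%R).
  { unfold r. split. apply Rinv_0_lt_compat; lra. apply Rinv_le_contravar; lra. }
  induction N.
  - simpl. lra.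
  - replace (S N + 2)%nat with (S (N + 2)) by lia.
    change (SI n (S (N+2))) with (SI n (N+2) + Rabs (imw n (S (N+2))))%R.
    pose proof (imw_le n (S (N + 2)) ltac:(lia)). fold r in H.
    replace (S (S (N + 2))) with (N + 4)%nat in H by lia.
    replace (S N + 4)%nat with (S (N + 4)) by lia. rewrite <- tech_pow_Rmult.
    assert (E : (r ^ (N + 4) + r * r ^ (N + 4) / (1 - r) = r ^ (N + 4) / (1 - r))%R).
    { field. lra. }
    lra.
Qed.

Definition Kb n := (INR n * INR n * (SI n 2 + (/ INR n) ^ 4 / (1 - / INR n)))%R.

Lemma SI_bound n N : (2 <= n)%nat -> (SI n N <= SI n 2 + (/ INR n) ^ 4 / (1 - / INR n))%R.
Proof.
  intro Hn. assert (Hx : (2 <= INR n)%R) by (apply (le_INR 2); auto).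
  assert (Hr : (0 < / INR n <= / 2)%R).
  { split. apply Rinv_0_lt_compat; lra. apply Rinv_le_contravar; lra. }
  pose proof (SI_tail n N Hn).
  pose proof (SI_mono n N (N + 2) ltac:(lia)).
  assert (0 <= (/ INR n) ^ (N + 4) / (1 - / INR n))%R.
  { apply Rdiv_le_0_compat. apply pow_le. lra. lra. }
  lra.
Qed.

Lemma repr_Im_bound n f u : (2 <= n)%nat ->
  (forall i, Rabs (f i) <= INR n * INR n)%R -> repr n f u -> (Rabs (Im u) <= Kb n)%R.
Proof.
  intros Hn Hf H. apply series_Im in H.
  assert (HN : forall N, Rabs (Im (sum_n (fun i => (RtoC (f i) * / (base n ^ (S i)))%C) N)) <= Kb n).
  { intro N. eapply Rle_trans. apply partial_bound. exact Hf. unfold Kb.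
    apply Rmult_le_compat_l. apply Rle_0_sqr. apply SI_bound; auto. }
  assert (HN2 : forall N, - Kb n <= Im (sum_n (fun i => (RtoC (f i) * / (base n ^ (S i)))%C) N) <= Kb n).
  { intro N. specialize (HN N). revert HN. generalize (Im (sum_n (fun i => (RtoC (f i) * / (base n ^ (S i)))%C) N)).
    intros x Hx. unfold Rabs in Hx. destruct (Rcase_abs x); lra. }
  assert (L1 := is_lim_seq_le (fun _ => - Kb n)%R _ (- Kb n)%R (Im u) (fun N => proj1 (HN2 N)) (is_lim_seq_const _) H).
  assert (L2 := is_lim_seq_le _ (fun _ => Kb n)%R (Im u) (Kb n) (fun N => proj2 (HN2 N)) H (is_lim_seq_const _)).
  simpl in L1, L2. unfold Rabs. destruct (Rcase_abs (Im u)); lra.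
Qed.

Lemma div_le_aux a b c : (b > 0 -> a <= c * b -> a / b <= c)%R.
Proof.
  intros Hb H. apply Rmult_le_reg_r with b; auto. unfold Rdiv.
  rewrite Rmult_assoc, Rinv_l by lra. lra.
Qed.

Lemma Kb_expr n : (2 <= n)%nat ->
  let x := INR n in let q := (x * x + 1)%R in
  Kb n = (x * x / q + 2 * x * x * x / (q * q) + x * x * (3 * x * x - 1) / (q * q * q)
          + 1 / (x * (x - 1)))%R.
Proof.
  intros Hn x q. assert (Hx : (2 <= x)%R) by (apply (le_INR 2); auto).
  assert (Hq : (q > 0)%R) by (unfold q; nra).
  unfold Kb. simpl SI. destruct (imw_vals n) as [E0 [E1 E2]]. fold x q in E0, E1, E2.
  rewrite E0, E1, E2. fold x.
  assert (Iq : (0 < / q)%R) by (apply Rinv_0_lt_compat; lra).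
  assert (Iq2 : (0 < / (q * q))%R) by (apply Rinv_0_lt_compat; nra).
  assert (Iq3 : (0 < / (q * q * q))%R) by (apply Rinv_0_lt_compat; repeat apply Rmult_lt_0_compat; lra).
  assert (H3 : (0 < 3 * x * x - 1)%R) by nra.
  rewrite Rabs_left by (unfold Rdiv; nra).
  rewrite Rabs_right by (unfold Rdiv; apply Rle_ge; apply Rmult_le_pos; nra).
  rewrite Rabs_left by (unfold Rdiv; rewrite <- Ropp_mult_distr_l; apply Ropp_lt_gt_0_contravar; apply Rmult_lt_0_compat; lra).
  simpl. field. repeat split; nra.
Qed.

Lemma pieces x (Hx : (2 <= x)%R) :
  let q := (x * x + 1)%R in
  (x * x / q <= 1 /\ 2 * x * x * x / (q * q) <= 1 /\
   x * x * (3 * x * x - 1) / (q * q * q) <= 1 /\ 1 / (x * (x - 1)) <= 1 / 2 /\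
   (4 <= x -> 2 * x * x * x / (q * q) <= 1/2 /\
     x * x * (3 * x * x - 1) / (q * q * q) <= 1/4 /\ 1 / (x * (x - 1)) <= 1 / 12))%R.
Proof.
  intro q. assert (Hq : (q > 0)%R) by (unfold q; nra).
  assert (Hq2 : (q * q > 0)%R) by nra.
  assert (Hq3 : (q * q * q > 0)%R) by (repeat apply Rmult_lt_0_compat; lra).
  assert (Hx2 : (x * x >= 4)%R) by nra.
  assert (Hx3 : (x * x * x >= 8)%R) by nra.
  assert (Hqq : (q * q >= x * x * x * x)%R) by (unfold q; nra).
  assert (Hqqq : (q * q * q >= x * x * x * x * x * x)%R).
  { unfold q. assert (x * x * (x * x) * (x * x) <= (x * x + 1) * (x * x + 1) * (x * x + 1))%R.
    { apply Rmult_le_compat; nra. } nra. }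
  assert (Hd : (x * (x - 1) > 0)%R) by nra.
  split; [|split; [|split; [|split]]].
  - apply div_le_aux; unfold q; nra.
  - apply div_le_aux; nra.
  - apply div_le_aux; auto.
    assert (x * x * x * x * (x * x - 3) >= 0)%R.
    { apply Rle_ge. apply Rmult_le_pos; nra. } nra.
  - apply div_le_aux; nra.
  - intro H4. split; [|split].
    + apply div_le_aux; nra.
    + apply div_le_aux; auto.
      assert (x * x * x * x * (x * x - 12) >= 0)%R.
      { apply Rle_ge. apply Rmult_le_pos; nra. } nra.
    + apply div_le_aux; nra.
Qed.

Lemma Kb_lt4 n : (2 <= n)%nat -> (Kb n < 4)%R.
Proof.
  intro Hn. rewrite Kb_expr by auto.
  assert (Hx : (2 <= INR n)%R) by (apply (le_INR 2); auto).
  destruct (pieces (INR n) Hx) as [P1 [P2 [P3 [P4 _]]]]. lra.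
Qed.

Lemma Kb_lt2 n : (3 <= n)%nat -> (Kb n < 2)%R.
Proof.
  intro Hn. rewrite Kb_expr by lia.
  assert (Hx : (3 <= INR n)%R) by (pose proof (le_INR 3 n ltac:(lia)) as HH; simpl in HH; lra).
  destruct (Nat.eq_dec n 3) as [->|Hne].
  - simpl. field_simplify; lra.
  - assert (H4 : (4 <= INR n)%R) by (pose proof (le_INR 4 n ltac:(lia)) as HH; simpl in HH; lra).
    destruct (pieces (INR n) ltac:(lra)) as [P1 [P2 [P3 [P4 P5]]]].
    destruct (P5 H4) as [Q2 [Q3 Q4]]. lra.
Qed.

Lemma repr_minus n f g u v : repr n f u -> repr n g v -> repr n (fun i => (f i - g i)%R) (u - v).
Proof.
  intros Hf Hg. unfold repr in *.
  pose proof (is_series_minus _ _ _ _ Hf Hg) as H.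
  eapply is_series_ext; [| exact H].
  intro i. change (Cminus (RtoC (f i) * / base n ^ S i) (RtoC (g i) * / base n ^ S i) = RtoC (f i - g i) * / base n ^ S i).
  rewrite RtoC_minus. ring.
Qed.

Lemma prepend_nth ds d i : (i < length ds)%nat -> prepend ds d i = INR (nth i ds 0%nat).
Proof.
  revert i. induction ds as [|a ds IH]; intros i Hi; simpl in *. lia.
  destruct i; simpl; auto. apply IH. lia.
Qed.

Lemma prepend_bound ds d i M : (forall x, In x ds -> (x <= M)%nat) -> (forall j, (d j <= M)%nat) ->
  (0 <= prepend ds d i <= INR M)%R.
Proof.
  revert i. induction ds as [|a ds IH]; intros i H1 H2; simpl.
  - split. apply pos_INR. apply le_INR. auto.
  - destruct i; simpl.
    + split. apply pos_INR. apply le_INR. apply H1. left; auto.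
    + apply IH; auto. intros x Hx. apply H1. right; auto.
Qed.

Lemma min_ex (P : nat -> Prop) : forall N j, (j <= N)%nat -> P j ->
  exists p, P p /\ (p <= j)%nat /\ forall i, (i < p)%nat -> ~ P i.
Proof.
  induction N; intros j Hj HP.
  - exists j. split; auto. split; auto. intros. lia.
  - destruct (Classical_Prop.classic (exists i, (i < j)%nat /\ P i)) as [[i [Hi Pi]]|Hno].
    + destruct (IHN i ltac:(lia) Pi) as [p [Pp [Hp Hmin]]]. exists p. split; auto. split; [lia|auto].
    + exists j. split; auto. split; auto. intros i Hi Pi. apply Hno. exists i. auto.
Qed.

Lemma shift_zeros n : forall p f, (forall i, (i < p)%nat -> f i = 0%R) -> repr n f 0 ->
  repr n (fun i => f (p + i)%nat) 0.
Proof.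
  induction p; intros f Hz H.
  - simpl. exact H.
  - apply repr_shift in H. rewrite (Hz 0%nat ltac:(lia)) in H.
    assert (E : (base n * 0 - RtoC 0 : C) = 0) by ring. rewrite E in H.
    apply (IHp (fun i => f (S i))) in H.
    + exact H.
    + intros i Hi. apply Hz. lia.
Qed.

Lemma tile_to_repr n ds z : in_tile n ds z ->
  exists d : nat -> nat, (forall j, (d j <= n * n)%nat) /\ repr n (prepend ds d) z.
Proof.
  intros [t [[d [Hd Ht]] Hz]]. exists d. split; auto. subst z. apply tile_repr. exact Ht.
Qed.

Theorem lemma4p4 (n : nat) (D : nat -> Prop) (k : nat) (ds ds' : list nat) :
  (2 <= n)%nat ->
  (forall d, D d -> (d <= n * n)%nat) ->
  (forall d d', D d -> D d' -> d' <> S d) ->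
  (1 <= k)%nat ->
  length ds = k -> length ds' = k ->
  List.Forall D ds -> List.Forall D ds' ->
  (exists j, (j < k)%nat /\ nth j ds 0%nat <> nth j ds' 0%nat) ->
  forall z : C, ~ (in_tile n ds z /\ in_tile n ds' z).
Proof.
  intros Hn HD Hadj Hk Hl Hl' HF HF' [j [Hj Hne]] z [T1 T2].
  destruct (tile_to_repr _ _ _ T1) as [d [Hd R1]].
  destruct (tile_to_repr _ _ _ T2) as [d' [Hd' R2]].
  pose proof (repr_minus _ _ _ _ _ R1 R2) as R.
  assert (E : (z - z : C) = 0) by ring. rewrite E in R. clear E.
  set (F := fun i => (prepend ds d i - prepend ds' d' i)%R) in R.
  destruct (min_ex (fun i => nth i ds 0%nat <> nth i ds' 0%nat) j j (le_n j) Hne) as [p [Hp [Hpj Hmin]]].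
  assert (Hpk : (p < k)%nat) by lia.
  assert (Hz : forall i, (i < p)%nat -> F i = 0%R).
  { intros i Hi. unfold F. rewrite !prepend_nth by lia.
    destruct (Nat.eq_dec (nth i ds 0%nat) (nth i ds' 0%nat)) as [e|e].
    rewrite e. ring. exfalso. apply (Hmin i Hi e). }
  apply (shift_zeros n p F Hz) in R.
  apply repr_shift in R.
  set (m := F (p + 0)%nat) in R.
  assert (Hm : (2 <= Rabs m)%R).
  { unfold m, F. replace (p + 0)%nat with p by lia. rewrite !prepend_nth by lia.
    assert (Da : D (nth p ds 0%nat)) by (apply Forall_nth; auto; lia).
    assert (Db : D (nth p ds' 0%nat)) by (apply Forall_nth; auto; lia).
    pose proof (Hadj _ _ Da Db). pose proof (Hadj _ _ Db Da).
    destruct (Compare_dec.le_lt_dec (nth p ds 0%nat) (nth p ds' 0%nat)).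
    - assert (H2 : (nth p ds 0%nat + 2 <= nth p ds' 0%nat)%nat) by lia.
      apply le_INR in H2. rewrite plus_INR in H2. simpl in H2.
      rewrite Rabs_left1; lra.
    - assert (H2 : (nth p ds' 0%nat + 2 <= nth p ds 0%nat)%nat) by lia.
      apply le_INR in H2. rewrite plus_INR in H2. simpl in H2.
      rewrite Rabs_right; lra. }
  set (G := fun i => F (p + S i)%nat) in R.
  assert (HG : forall i, (Rabs (G i) <= INR n * INR n)%R).
  { intro i. unfold G, F. rewrite <- mult_INR.
    assert (B1 : forall x, In x ds -> (x <= n * n)%nat).
    { intros x Hx. apply HD. rewrite Forall_forall in HF. auto. }
    assert (B2 : forall x, In x ds' -> (x <= n * n)%nat).
    { intros x Hx. apply HD. rewrite Forall_forall in HF'. auto. }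
    pose proof (prepend_bound ds d (p + S i) (n * n) B1 Hd).
    pose proof (prepend_bound ds' d' (p + S i) (n * n) B2 Hd').
    apply Rabs_le. lra. }
  pose proof (repr_shift _ _ _ R) as R1'.
  pose proof (repr_Im_bound n _ _ Hn (fun i => HG (S i)) R1') as B1.
  assert (I1 : Im (base n * (base n * 0 - RtoC m) - RtoC (G 0%nat)) = (- m)%R).
  { unfold base, RtoC. simpl. ring. }
  rewrite I1, Rabs_Ropp in B1.
  destruct (Compare_dec.le_lt_dec 3 n) as [H3|H3].
  - pose proof (Kb_lt2 n H3). lra.
  - assert (n = 2%nat) by lia. subst n.
    pose proof (repr_shift _ _ _ R1') as R2'.
    pose proof (repr_Im_bound 2 _ _ Hn (fun i => HG (S (S i))) R2') as B2.
    assert (I2 : Im (base 2 * (base 2 * (base 2 * 0 - RtoC m) - RtoC (G 0%nat)) - RtoC (G 1%nat))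
                 = (4 * m - G 0%nat)%R).
    { unfold base, RtoC. simpl. ring. }
    cbv beta in B2. rewrite I2 in B2. pose proof (Kb_lt4 2 Hn) as K4.
    pose proof (HG 0%nat) as HG0. simpl in HG0.
    revert B2 Hm HG0 K4. generalize (G 0%nat) m. intros g mm. unfold Rabs.
    destruct (Rcase_abs (4 * mm - g)); destruct (Rcase_abs mm); destruct (Rcase_abs g); lra.
Qed.
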